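(* Let $\mathcal{A}=(A,\le,\wedge,1,\to)$ be a strong algebra whose monoidal structure is its meet structure and which internalizes its monoidal structure, i.e. $a\to(b\wedge c)=(a\to b)\wedge(a\to c)$ for all $a,b,c$. Then there exist a Kripke frame $\mathcal{K}=(W,\le_W,R)$ and a map $i:A\to U(W,\le_W)$ which preserves finite meets, is an order embedding, and satisfies $i(a\to b)=i(a)\to_{\mathcal{K}}i(b)$. Moreover, if $(A,\le)$ has all finite joins, is distributive, and $\to$ internalizes joins ($(a\vee b)\to c=(a\to c)\wedge(b\to c)$), then $i$ can be chosen to preserve finite joins as well. Finally, if $\mathcal{A}$ is the reduct of a temporal algebra, i.e. there is $\nabla:A\to A$ with $a\wedge\nabla b\le c$ iff $b\le a\to c$, then $i$ also satisfies $i(\nabla a)=\nabla_{\mathcal{K}}i(a)$, and for any $\mathcal{R}\subseteq\{N,H,P,F,wF\}$, if $(A,\le,\wedge,1,\nabla,\to)$ satisfies $\mathcal{R}$ then so does $\mathcal{K}$.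
   Context: An implication on a meet-semilattice with top $(A,\le,\wedge,1)$ is a map $\to:A^{op}\times A\to A$, antitone in the first and monotone in the second argument, with $1\le a\to a$ and $(a\to b)\wedge(b\to c)\le a\to c$; a strong algebra is such a structure. Distributive means binary meet distributes over finite joins. A Kripke frame is $(W,\le_W,R)$ with $(W,\le_W)$ a poset and $R\subseteq W\times W$ such that $(u,v)\in R$, $u'\le_W u$, $v\le_W v'$ imply $(u',v')\in R$. $U(W,\le_W)$ is the set of upsets of $(W,\le_W)$ ordered by inclusion, with meet $\cap$ and top $W$. For an upset $X$, $\nabla_{\mathcal{K}}X=\{v\in W\mid\exists u\in X\,(u,v)\in R\}$, and $X\to_{\mathcal{K}}Y=\{w\in W\mid\forall v\,((w,v)\in R\wedge v\in X\Rightarrow v\in Y)\}$, so that $X\cap\nabla_{\mathcal{K}}Y\subseteq Z$ iff $Y\subseteq X\to_{\mathcal{K}}Z$. The algebra satisfies: $(N)$ if $\nabla1=1$ and $\nabla(a\wedge b)=\nabla a\wedge\nabla b$; $(H)$ if $\nabla$ preserves all the structure, including $\nabla(a\to b)=\nabla a\to\nabla b$; $(P)$ if $\nabla a\le a$; $(F)$ if $a\le\nabla a$; $(wF)$ if $A$ has a least element $0$ and $\nabla a=0$ implies $a=0$. The frame satisfies: $(N)$ if there is an order-preserving $\pi:W\to W$ with $(u,v)\in R$ iff $u\le_W\pi(v)$; $(H)$ if moreover such $\pi$ is an order isomorphism; $(P)$ if $R\subseteq\le_W$; $(F)$ if $R$ is reflexive; $(wF)$ if $R$ is serial ($\forall u\,\exists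 v\,(u,v)\in R$). *)

(* Defs.v *)
From HB Require Import structures.
From mathcomp Require Import all_boot all_order.
Set Implicit Arguments. Unset Strict Implicit. Unset Printing Implicit Defensive.
Import Order.TTheory.
Local Open Scope order_scope.

Section Alg.
Context {d : Order.disp_t} {A : tMeetSemilatticeType d}.

Definition is_implication (imp : A -> A -> A) : Prop :=
  [/\ (forall a a' b, a' <= a -> imp a b <= imp a' b),
      (forall a b b', b <= b' -> imp a b <= imp a b'),
      (forall a, \top <= imp a a) &
      (forall a b c, imp a b `&` imp b c <= imp a c)].

Definition internalizes_meets (imp : A -> A -> A) : Prop :=
  forall a b c, imp a (b `&` c) = imp a b `&` imp a c.

Definition is_finite_joins (join : A -> A -> A) (bot : A) : Prop :=
  [/\ (forall a b, a <= join a b), (forall a b, b <= join a b),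
      (forall a b c, a <= c -> b <= c -> join a b <= c) &
      (forall a, bot <= a)].

Definition distributive (join : A -> A -> A) (bot : A) : Prop :=
  (forall a b c, a `&` join b c = join (a `&` b) (a `&` c)) /\
  (forall a, a `&` bot = bot).

Definition internalizes_joins (imp : A -> A -> A) (join : A -> A -> A) (bot : A)
  : Prop :=
  (forall a b c, imp (join a b) c = imp a c `&` imp b c) /\
  (forall c, imp bot c = \top).

Definition temporal (imp : A -> A -> A) (nabla : A -> A) : Prop :=
  forall a b c, (a `&` nabla b <= c) <-> (b <= imp a c).

End Alg.

Inductive cond := cN | cH | cP | cF | cwF.

Definition alg_sat {d} {A : tMeetSemilatticeType d} (imp : A -> A -> A)
  (nabla : A -> A) (c : cond) : Prop :=
  match c with
  | cN => nabla \top = \top /\ (forall a b, nabla (a `&` b) = nabla a `&` nabla b)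
  | cH => [/\ nabla \top = \top,
              (forall a b, nabla (a `&` b) = nabla a `&` nabla b) &
              (forall a b, nabla (imp a b) = imp (nabla a) (nabla b))]
  | cP => forall a, nabla a <= a
  | cF => forall a, a <= nabla a
  | cwF => exists z : A, (forall a, z <= a) /\ (forall a, nabla a = z -> a = z)
  end.

Definition kripke_frame (W : Type) (leW R : W -> W -> Prop) : Prop :=
  [/\ (forall u, leW u u),
      (forall u v w, leW u v -> leW v w -> leW u w),
      (forall u v, leW u v -> leW v u -> u = v) &
      (forall u v u' v', R u v -> leW u' u -> leW v v' -> R u' v')].

Definition is_upset (W : Type) (leW : W -> W -> Prop) (X : W -> Prop) : Prop :=
  forall u v, X u -> leW u v -> X v.

Definition nablaK (W : Type) (R : W -> W -> Prop) (X : W -> Prop) : W -> Prop :=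
  fun v => exists u, X u /\ R u v.

Definition impK (W : Type) (R : W -> W -> Prop) (X Y : W -> Prop) : W -> Prop :=
  fun w => forall v, R w v -> X v -> Y v.

Definition frame_sat (W : Type) (leW R : W -> W -> Prop) (c : cond) : Prop :=
  match c with
  | cN => exists pi : W -> W, (forall u v, leW u v -> leW (pi u) (pi v)) /\
            (forall u v, R u v <-> leW u (pi v))
  | cH => exists pi : W -> W,
            [/\ (forall u v, leW u v <-> leW (pi u) (pi v)),
                (forall v, exists u, pi u = v) &
                (forall u v, R u v <-> leW u (pi v))]
  | cP => forall u v, R u v -> leW u v
  | cF => forall u, R u u
  | cwF => forall u, exists v, R u v
  end.

(* Main.v *)
Require Import Defs.
From HB Require Import structures.
From mathcomp Require Import all_boot all_order.
From mathcomp Require classical_sets.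
From Stdlib Require Import Classical FunctionalExtensionality PropExtensionality ProofIrrelevance.
Import Order.TTheory.
Local Open Scope order_scope.

Section Zo.
Context {d : Order.disp_t} {A : tMeetSemilatticeType d}.
Variables (join : A -> A -> A) (bot : A).
Hypothesis Hj : is_finite_joins join bot.
Hypothesis Hd : distributive join bot.

Lemma jl a b : a <= join a b. Proof. by case: Hj. Qed.
Lemma jr a b : b <= join a b. Proof. by case: Hj. Qed.
Lemma jlub a b c : a <= c -> b <= c -> join a b <= c. Proof. by case: Hj => _ _ H _; apply: H. Qed.
Lemma botle a : bot <= a. Proof. by case: Hj. Qed.
Lemma jmono a b a' b' : a <= a' -> b <= b' -> join a b <= join a' b'.
Proof. move=> h1 h2; apply: jlub; [apply: le_trans h1 (jl _ _)|apply: le_trans h2 (jr _ _)]. Qed.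

Lemma distr_key m x x' : join m x `&` join m x' <= join m (x `&` x').
Proof.
case: Hd => D _.
rewrite D; apply: jlub; first by apply: le_trans (leIr _ _) (jl _ _).
rewrite meetC D; apply: jlub.
  by apply: le_trans (jl _ _); apply: leIr.
by apply: le_trans (jr _ _); rewrite meetC.
Qed.

Variable T : A -> A -> Prop.
Hypothesis T_refl : forall x, T x x.
Hypothesis T_trans : forall x y z, T x y -> T y z -> T x z.
Hypothesis T_anti : forall x x' y, x' <= x -> T x y -> T x' y.
Hypothesis T_mono : forall x y y', y <= y' -> T x y -> T x y'.
Hypothesis T_meet : forall x y y', T x y -> T x y' -> T x (y `&` y').
Hypothesis T_join : forall x x' y, T x y -> T x' y -> T (join x x') y.

Variable J0 : A -> Prop.
Hypothesis J0_down : forall x y, x <= y -> J0 y -> J0 x.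
Hypothesis J0_join : forall x y, J0 x -> J0 y -> J0 (join x y).
Hypothesis J0_bot : J0 bot.
Hypothesis J0_T : forall x y, T x y -> J0 y -> J0 x.
Variable a : A.
Hypothesis J0_a : ~ J0 a.

Definition good (M : A -> Prop) :=
  [/\ (forall x y, x <= y -> M y -> M x), (forall x y, M x -> M y -> M (join x y)),
      (forall x y, T x y -> M y -> M x) & ~ M a].

Lemma zorn_prime : exists Q : A -> Prop,
  [/\ [/\ Q \top, (forall x y, Q x -> Q y -> Q (x `&` y)) & (forall x y, x <= y -> Q x -> Q y)],
      ~ Q bot /\ (forall x y, Q (join x y) -> Q x \/ Q y),
      Q a, (forall x, J0 x -> ~ Q x) & (forall x y, T x y -> Q x -> Q y)].
Proof.
pose P (X : A -> Prop) := good (fun x => X x \/ J0 x).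
have [X [PX Xmax]] : exists X : classical_sets.set A, P X /\
   (forall B, classical_sets.proper X B -> ~ P B).
  apply: classical_sets.Zorn_bigcup => F FP Ftot.
  rewrite /P /classical_sets.bigcup /=.
  split.
  - move=> x y xy [[X' FX' X'y]|J0y]; last by right; apply: J0_down J0y.
    have [H _ _ _] := FP _ FX'.
    case: (H x y xy (or_introl X'y)) => [?|?]; [left; exists X' | right] => //.
  - move=> x y [[X1 F1 X1x]|J0x] [[X2 F2 X2y]|J0y].
    + case: (Ftot _ _ F1 F2) => S.
      * have [_ H _ _] := FP _ F2.
        case: (H x y (or_introl (S _ X1x)) (or_introl X2y)) => ?; [left; exists X2|right] => //.
      * have [_ H _ _] := FP _ F1.
        case: (H x y (or_introl X1x) (or_introl (S _ X2y))) => ?; [left; exists X1|right] => //.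
    + have [_ H _ _] := FP _ F1.
      case: (H x y (or_introl X1x) (or_intror J0y)) => ?; [left; exists X1|right] => //.
    + have [_ H _ _] := FP _ F2.
      case: (H x y (or_intror J0x) (or_introl X2y)) => ?; [left; exists X2|right] => //.
    + by right; apply: J0_join.
  - move=> x y Txy [[X' FX' X'y]|J0y]; last by right; apply: J0_T J0y.
    have [_ _ H _] := FP _ FX'.
    case: (H x y Txy (or_introl X'y)) => [?|?]; [left; exists X' | right] => //.
  - move=> [[X' FX' X'a]|//].
    by have [_ _ _ H] := FP _ FX'; apply: H; left.
pose M x := X x \/ J0 x.
have [Mdown Mjoin MT Ma] : good M by [].
have Mbot : M bot by right.
have key : forall x, ~ M x -> exists m, M m /\ T a (join m x).
  move=> x nMx; apply: NNPP => nN.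
  pose N z := exists m, M m /\ T z (join m x).
  have PN : P N.
    have Nw : forall z, N z \/ J0 z -> N z.
      move=> z [//|J0z]; exists z; split; first by right.
      by apply: T_mono (T_refl _); apply: jl.
    split.
    - move=> u v uv /Nw [m [Mm Tm]]; left; exists m; split => //; exact: T_anti Tm.
    - move=> u v /Nw [m1 [M1 T1]] /Nw [m2 [M2 T2]]; left; exists (join m1 m2); split.
        exact: Mjoin.
      apply: T_join; [apply: T_mono T1|apply: T_mono T2]; apply: jmono => //;
        [apply: jl|apply: jr].
    - move=> u v Tuv /Nw [m [Mm Tm]]; left; exists m; split => //; exact: T_trans Tm.
    - by move=> /Nw.
  apply: (Xmax N) PN; split.
    move=> z Xz; exists z; split; first by left.
    by apply: T_mono (T_refl _); apply: jl.
  move=> NX; apply: nMx; left; apply: NX; exists bot; split => //.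
  by apply: T_mono (T_refl _); apply: jr.
exists (fun x => ~ M x); split.
- split.
  + by move=> Mt; apply: Ma; apply: Mdown Mt; apply: lex1.
  + move=> x y nMx nMy Mxy.
    have [m1 [M1 T1]] := key _ nMx; have [m2 [M2 T2]] := key _ nMy.
    apply: Ma; apply: (MT a (join (join m1 m2) (x `&` y))); last first.
      by apply: (Mjoin) => //; apply: (Mjoin).
    apply: T_mono (distr_key _ _ _) _; apply: T_meet.
      by apply: T_mono T1; apply: jmono => //; apply: jl.
    by apply: T_mono T2; apply: jmono => //; apply: jr.
  + by move=> x y xy nMx My; apply: nMx; apply: Mdown My.
- split; first by [].
  move=> x y nMj; apply: NNPP => H; apply: nMj; apply: Mjoin; apply: NNPP => ?; apply: H; tauto.
- by [].
- by move=> x J0x []; right.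
- by move=> x y Txy nMx My; apply: nMx; apply: MT My.
Qed.
End Zo.

Arguments jl {d A join bot} Hj a b.
Arguments jr {d A join bot} Hj a b.
Arguments jlub {d A join bot} Hj a b c.
Arguments botle {d A join bot} Hj a.

Section Main.
Context {d : Order.disp_t} {A : tMeetSemilatticeType d} (imp : A -> A -> A).
Hypothesis Himp : is_implication imp.
Hypothesis Hmi : internalizes_meets imp.

Lemma imp_anti a a' b : a' <= a -> imp a b <= imp a' b.
Proof. by case: Himp => H _ _ _; apply: H. Qed.
Lemma imp_mono a b b' : b <= b' -> imp a b <= imp a b'.
Proof. by case: Himp => _ H _ _; apply: H. Qed.
Lemma imp_id a : \top <= imp a a.
Proof. by case: Himp. Qed.
Lemma imp_tr a b c : imp a b `&` imp b c <= imp a c.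
Proof. by case: Himp. Qed.
Lemma imp_le a b : a <= b -> \top <= imp a b.
Proof. by move=> h; exact: le_trans (imp_id a) (imp_mono a a b h). Qed.

Definition filt (F : A -> Prop) :=
  [/\ F \top, (forall x y, F x -> F y -> F (x `&` y)) & (forall x y, x <= y -> F x -> F y)].
Definition Dj := exists (join : A -> A -> A) (bot : A), [/\ is_finite_joins join bot, distributive join bot &
   internalizes_joins imp join bot].
Definition primeP (F : A -> Prop) := forall (join : A -> A -> A) (bot : A), is_finite_joins join bot ->
  distributive join bot -> internalizes_joins imp join bot ->
  ~ F bot /\ (forall a b, F (join a b) -> F a \/ F b).
Record pt := Pt { car : A -> Prop; pf : filt car; pp : primeP car }.
Definition Ex := exists nab, temporal imp nab.
Definition leW (p q : pt) := (forall x, car p x -> car q x) /\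
   (Ex \/ forall x, car q x -> car p x).
Definition RR (p q : pt) := forall x y, car p (imp x y) -> car q x -> car q y.
Definition ii (a : A) (p : pt) := car p a.

Lemma ftop (p : pt) : car p \top. Proof. by case: (pf p). Qed.
Lemma fmeet (p : pt) x y : car p x -> car p y -> car p (x `&` y). Proof. by case: (pf p) => _ H _; apply: H. Qed.
Lemma fup (p : pt) x y : car p x -> x <= y -> car p y. Proof. by case: (pf p) => _ _ H px xy; apply: H xy px. Qed.
Arguments fup {p x y}.
Arguments fmeet {p x y}.

Lemma pt_eq (p q : pt) : (forall x, car p x <-> car q x) -> p = q.
Proof.
case: p => c1 f1 p1; case: q => c2 f2 p2 /= H.
have E : c1 = c2 by apply: functional_extensionality => x; apply: propositional_extensionality.
subst c2; f_equal; apply: proof_irrelevance.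
Qed.

Lemma join_uniq (j : A -> A -> A) b j' b' : is_finite_joins j b -> is_finite_joins j' b' ->
  (forall x y, j x y = j' x y) /\ b = b'.
Proof.
move=> H H'; split.
  by move=> x y; apply: le_anti; rewrite !(jlub H, jlub H') ?(jl H, jr H, jl H', jr H').
by apply: le_anti; rewrite (botle H) (botle H').
Qed.

Lemma primeP_nD (F : A -> Prop) : ~ Dj -> primeP F.
Proof. by move=> nD j b H1 H2 H3; exfalso; apply: nD; exists j, b. Qed.

Lemma primeP_D (F : A -> Prop) (j : A -> A -> A) b : is_finite_joins j b -> ~ F b ->
  (forall x y, F (j x y) -> F x \/ F y) -> primeP F.
Proof.
move=> Hj nb pr j' b' Hj' _ _; have [E1 E2] := join_uniq _ _ _ _ Hj Hj'.
by subst b'; split => // x y; rewrite -E1; apply: pr.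
Qed.

Lemma upf a : filt (fun x => a <= x).
Proof. split; [exact: lex1 | by move=> x y h1 h2; rewrite lexI h1 h2 | by move=> x y h1 h2; apply: le_trans h2 h1]. Qed.

Lemma prime_thm (j : A -> A -> A) b : is_finite_joins j b -> distributive j b ->
  forall J0 : A -> Prop, (forall x y, x <= y -> J0 y -> J0 x) ->
  (forall x y, J0 x -> J0 y -> J0 (j x y)) -> J0 b ->
  forall a, ~ J0 a -> exists p : pt, car p a /\ forall x, J0 x -> ~ car p x.
Proof.
move=> Hj Hd J0 Jd Jj Jb a Ja.
have [|||||||Q [Qf [Qb Qp] Qa QJ _]] := @zorn_prime _ _ j b Hj Hd (fun x y => x <= y)
  _ _ _ _ _ _ J0 Jd Jj Jb _ a Ja.
- exact: le_refl.
- by move=> x y z; apply: le_trans.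
- by move=> x x' y h1 h2; apply: le_trans h1 h2.
- by move=> x y y' h1 h2; apply: le_trans h2 h1.
- by move=> x y y' h1 h2; rewrite lexI h1 h2.
- by move=> x x' y h1 h2; apply: (jlub Hj).
- by move=> x y h1 h2; apply: Jd h2.
exists (@Pt Q Qf (primeP_D _ _ _ Hj Qb Qp)); split => //.
Qed.

Lemma imp_wit (j : A -> A -> A) b : is_finite_joins j b -> distributive j b -> internalizes_joins imp j b ->
  forall (P : pt) x z, ~ car P (imp x z) -> exists q : pt, RR P q /\ car q x /\ ~ car q z.
Proof.
move=> Hj Hd [Ij1 Ij2] P a c Pac.
have [||||||||||Q [Qf [Qb Qp] Qa QJ QT]] := @zorn_prime _ _ j b Hj Hd
  (fun x y => car P (imp x y))
  _ _ _ _ _ _ (fun x => car P (imp x c)) _ _ _ _ a Pac.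
- by move=> x; apply: fup (ftop P) _; apply: imp_id.
- by move=> x y w h1 h2; apply: fup (fmeet h1 h2) _; apply: imp_tr.
- by move=> x x' y h1 h; apply: fup h _; apply: imp_anti.
- by move=> x y y' h1 h; apply: fup h _; apply: imp_mono.
- by move=> x y y' h1 h2; rewrite Hmi; apply: fmeet.
- by move=> x x' y h1 h2; rewrite Ij1; apply: fmeet.
- by move=> x y h1 h; apply: fup h _; apply: imp_anti.
- by move=> x y h1 h2; rewrite Ij1; apply: fmeet.
- by rewrite Ij2; apply: ftop.
- by move=> x y h1 h2; apply: fup (fmeet h1 h2) _; apply: imp_tr.
exists (@Pt Q Qf (primeP_D _ _ _ Hj Qb Qp)); split; last split => //=.
  by move=> x y; apply: QT.
by apply: QJ; apply: fup (ftop P) _; apply: imp_id.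
Qed.

Section Nab.
Variable nab : A -> A.
Hypothesis Ht : temporal imp nab.

Lemma nab_le b c : nab b <= c <-> b <= imp \top c.
Proof. by rewrite -Ht meet1x. Qed.
Lemma nab_unit b : b <= imp \top (nab b).
Proof. by apply/nab_le. Qed.
Lemma nab_counit c : nab (imp \top c) <= c.
Proof. by apply/nab_le. Qed.
Lemma nab_mono a b : a <= b -> nab a <= nab b.
Proof. by move=> h; apply/nab_le; apply: le_trans h (nab_unit b). Qed.
Lemma nab_mp x y : x `&` nab (imp x y) <= y.
Proof. by apply/Ht. Qed.

Lemma R_nab (p q : pt) : RR p q <-> forall c, car p c -> car q (nab c).
Proof.
split.
  move=> H c pc; apply: (H \top); last exact: ftop.
  by apply: fup pc _; apply: nab_unit.
move=> H x y pxy qx; apply: fup (fmeet qx (H _ pxy)) _; apply: nab_mp.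
Qed.
End Nab.

Lemma nab_uniq (n1 n2 : A -> A) : temporal imp n1 -> temporal imp n2 -> forall x, n1 x = n2 x.
Proof.
move=> H1 H2 x; apply: le_anti; apply/andP; split.
  by apply/(nab_le _ H1); apply: (nab_unit _ H2).
by apply/(nab_le _ H2); apply: (nab_unit _ H1).
Qed.

Lemma leW_E : Ex -> forall p q, leW p q <-> (forall x, car p x -> car q x).
Proof. by move=> E p q; split; [case | move=> H; split => //; left]. Qed.

Lemma pi_prime nab (Ht : temporal imp nab) (p : pt) : primeP (fun c => car p (nab c)).
Proof.
move=> j b Hj Hd Hij; have [pb ppr] := pp p _ _ Hj Hd Hij; split.
  move=> h; apply: pb; apply: fup h _; apply/(nab_le _ Ht); exact: (botle Hj).
move=> x y h; apply: ppr; apply: fup h _; apply/(nab_le _ Ht); apply: (jlub Hj).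
  apply: le_trans (nab_unit _ Ht x) _; apply: imp_mono; exact: (jl Hj).
apply: le_trans (nab_unit _ Ht y) _; apply: imp_mono; exact: (jr Hj).
Qed.

Lemma L_frame : kripke_frame leW RR.
Proof.
split.
- by move=> u; split => //; right.
- move=> u v w [h1 e1] [h2 e2]; split; first by move=> x /h1 /h2.
  case: e1 => [E|r1]; first by left.
  case: e2 => [E|r2]; first by left.
  by right => x /r2 /r1.
- move=> u v [h1 _] [h2 _]; apply: pt_eq => x; split; [apply: h1|apply: h2].
- move=> u v u' v' Ruv [h1 e1] [h2 e2].
  case: (classic Ex) => [[nab Ht]|nE].
  + apply/(R_nab _ Ht) => c /h1 uc; apply: h2; exact: (proj1 (R_nab _ Ht u v) Ruv).
  + case: e2 => // r2.
    move=> x y /h1 uxy /r2 vx; apply: h2; exact: Ruv uxy vx.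
Qed.

Lemma L_emb a b : a <= b <-> (forall p : pt, ii a p -> ii b p).
Proof.
rewrite /ii; split; first by move=> ab p pa; apply: fup pa ab.
move=> H; apply: NNPP => nab.
case: (classic Dj) => [[j [b0 [Hj Hd Hij]]]|nD].
- have Jd : forall x y, x <= y -> (fun x => x <= b) y -> (fun x => x <= b) x.
    by move=> x y xy yb; apply: le_trans xy yb.
  have Jj : forall x y, (fun x => x <= b) x -> (fun x => x <= b) y -> (fun x => x <= b) (j x y).
    by move=> x y h1 h2; apply: (jlub Hj).
  have Jb : (fun x => x <= b) b0 by apply: (botle Hj).
  have [p [pa pn]] := @prime_thm j b0 Hj Hd (fun x => x <= b) Jd Jj Jb a nab.
  by apply: (pn b (le_refl b)); apply: H.
- pose p := @Pt (fun x => a <= x) (upf a) (primeP_nD (fun x => a <= x) nD).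
  by apply: nab; exact: (H p (le_refl a)).
Qed.

Lemma L_imp a b p : ii (imp a b) p <-> impK RR (ii a) (ii b) p.
Proof.
rewrite /ii /impK; split; first by move=> H v Rpv va; apply: Rpv H va.
move=> H; apply: NNPP => n.
case: (classic Dj) => [[j [b0 [Hj Hd Hij]]]|nD].
- have [q [Rpq [qa qb]]] := @imp_wit j b0 Hj Hd Hij p a b n.
  by apply: qb; apply: H.
- have qf : filt (fun y => car p (imp a y)).
    split.
    + apply: fup (ftop p) _; apply: le_trans (imp_id a) _; apply: imp_mono; apply: lex1.
    + by move=> x y h1 h2; rewrite Hmi; apply: fmeet.
    + by move=> x y xy h; apply: fup h _; apply: imp_mono.
  apply: n; apply: (H (@Pt _ qf (primeP_nD _ nD))); rewrite /RR /=.
  + move=> x y h1 h2; apply: fup (fmeet h2 h1) _; apply: imp_tr.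
  + apply: fup (ftop p) _; apply: imp_id.
Qed.

Lemma L_join (j : A -> A -> A) b : is_finite_joins j b -> distributive j b ->
  internalizes_joins imp j b ->
  (forall w, ~ ii b w) /\ (forall x y w, ii (j x y) w <-> (ii x w \/ ii y w)).
Proof.
rewrite /ii; move=> Hj Hd Hij; split; first by move=> w; case: (pp w _ _ Hj Hd Hij).
move=> x y w; split; first by case: (pp w _ _ Hj Hd Hij) => _; apply.
by case=> h; apply: fup h _; [exact: (jl Hj) | exact: (jr Hj)].
Qed.

Lemma L_nab nab (Ht : temporal imp nab) a w : ii (nab a) w <-> nablaK RR (ii a) w.
Proof.
rewrite /ii /nablaK; split; last first.
  move=> [u [ua Ruw]]; apply: (Ruw \top); last exact: ftop.
  by apply: fup ua _; exact: (nab_unit _ Ht).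
move=> wa.
case: (classic Dj) => [[j [b0 [Hj Hd Hij]]]|nD].
- pose J0 z := exists x y, [/\ car w x, ~ car w y & z <= imp x y].
  have [wb0 wpr] := pp w _ _ Hj Hd Hij.
  have Jd : forall x y, x <= y -> J0 y -> J0 x.
    by move=> x y xy [u [v [h1 h2 h3]]]; exists u, v; split => //; apply: le_trans xy h3.
  have Jj : forall x y, J0 x -> J0 y -> J0 (j x y).
    move=> x y [u1 [v1 [a1 b1 c1]]] [u2 [v2 [a2 b2 c2]]].
    exists (u1 `&` u2), (j v1 v2); split.
    + exact: fmeet.
    + by case/wpr.
    + apply: (jlub Hj).
      * apply: le_trans c1 _; apply: le_trans (imp_anti _ _ v1 (leIl u1 u2)) _.
        apply: imp_mono; exact: (jl Hj).
      * apply: le_trans c2 _; apply: le_trans (imp_anti _ _ v2 (leIr u2 u1)) _.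
        apply: imp_mono; exact: (jr Hj).
  have Jb : J0 b0.
    by exists \top, b0; split => //; [apply: ftop | apply: (botle Hj)].
  have Ja : ~ J0 a.
    move=> [x [y [wx wy axy]]]; apply: wy.
    by apply: fup (fmeet wx wa) _; apply/Ht.
  have [u [ua uJ]] := @prime_thm j b0 Hj Hd J0 Jd Jj Jb a Ja.
  exists u; split => // x y uxy wx; apply: NNPP => wy; apply: (uJ _ _ uxy).
  by exists x, y; split.
- exists (@Pt (fun x => a <= x) (upf a) (primeP_nD _ nD)); split; first exact: le_refl.
  by move=> x y /= axy wx; apply: fup (fmeet wx wa) _; apply/Ht.
Qed.

Lemma L_conds nab (Ht : temporal imp nab) (c : cond) :
  alg_sat imp nab c -> frame_sat leW RR c.
Proof.
have E : Ex by exists nab.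
have lw := leW_E E.
have Rn := R_nab _ Ht.
case: c => /=.
- case=> N1 N2.
  have pf' : forall p : pt, filt (fun c => car p (nab c)).
    move=> p; split.
    + by rewrite N1; apply: ftop.
    + by move=> x y h1 h2; rewrite N2; apply: fmeet.
    + by move=> x y xy h; apply: fup h _; apply: (nab_mono _ Ht).
  exists (fun p => @Pt _ (pf' p) (pi_prime _ Ht p)); split.
  + by move=> u v /lw h; apply/lw => x /h.
  + by move=> u v; rewrite Rn lw.
- case=> N1 N2 N3.
  have bd x : imp \top (nab x) = x /\ nab (imp \top x) = x.
    have e : nab (imp \top x) = imp \top (nab x) by rewrite N3 N1.
    have h1 := nab_unit _ Ht x; have h2 := nab_counit _ Ht x.
    have h3 : imp \top (nab x) <= x by rewrite -e.
    have h4 : x <= nab (imp \top x) by rewrite e.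
    by split; apply: le_anti; apply/andP; split.
  have refl x y : nab x <= nab y -> x <= y.
    by move=> h; rewrite -(proj1 (bd x)) -(proj1 (bd y)); apply: imp_mono.
  have pf' : forall p : pt, filt (fun c => car p (nab c)).
    move=> p; split.
    + by rewrite N1; apply: ftop.
    + by move=> x y h1 h2; rewrite N2; apply: fmeet.
    + by move=> x y xy h; apply: fup h _; apply: (nab_mono _ Ht).
  exists (fun p => @Pt _ (pf' p) (pi_prime _ Ht p)); split.
  + move=> u v; split; first by move=> /lw h; apply/lw => x /h.
    move=> /lw h; apply/lw => x ux.
    have : car (@Pt _ (pf' u) (pi_prime _ Ht u)) (imp \top x) by rewrite /= (proj2 (bd x)).
    by move/h => /=; rewrite (proj2 (bd x)).
  + move=> v.
    have uf : filt (fun y => car v (imp \top y)).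
      split.
      * by apply: fup (ftop v) _; apply: imp_le; apply: lex1.
      * by move=> x y h1 h2; rewrite Hmi; apply: fmeet.
      * by move=> x y xy h; apply: fup h _; apply: imp_mono.
    have up : primeP (fun y => car v (imp \top y)).
      move=> j b Hj Hd Hij; have [vb vpr] := pp v _ _ Hj Hd Hij; split.
      * move=> h; apply: vb; apply: fup h _; apply: refl; rewrite (proj2 (bd b)).
        exact: (botle Hj).
      * move=> x y h; apply: vpr; apply: fup h _; apply: refl.
        rewrite (proj2 (bd (j x y))); apply: (jlub Hj).
          by rewrite -{1}(proj2 (bd x)); apply: (nab_mono _ Ht); exact: (jl Hj).
        by rewrite -{1}(proj2 (bd y)); apply: (nab_mono _ Ht); exact: (jr Hj).
    exists (@Pt _ uf up); apply: pt_eq => x /=; rewrite (proj1 (bd x)); done.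
  + by move=> u v; rewrite Rn lw.
- move=> HP u v /Rn h; apply/lw => x ux; apply: fup (h _ ux) _; apply: HP.
- move=> HF u; apply/Rn => x ux; apply: fup ux _; apply: HF.
- case=> z [zl zinj] u.
  case: (classic Dj) => [[j [b0 [Hj Hd Hij]]]|nD].
  + have [ub _] := pp u _ _ Hj Hd Hij.
    have n : ~ car u (imp \top b0).
      move=> h; apply: ub; apply: fup h _.
      have e : nab (imp \top b0) = z.
        apply: le_anti; rewrite zl andbT.
        apply: le_trans (nab_counit _ Ht b0) _; exact: (botle Hj).
      by rewrite (zinj _ e); apply: zl.
    have [v [Ruv _]] := @imp_wit j b0 Hj Hd Hij u \top b0 n.
    by exists v.
  + have tf : filt (fun _ : A => True) by split.
    by exists (@Pt _ tf (primeP_nD _ nD)).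
Qed.

Lemma main_thm :
  exists (W : Type) (leW R : W -> W -> Prop) (i : A -> W -> Prop),
    kripke_frame leW R /\
        (forall a, is_upset leW (i a)) /\
        ((forall w, i \top w) /\
          (forall a b w, i (a `&` b) w <-> (i a w /\ i b w))) /\
        (forall a b, a <= b <-> (forall w, i a w -> i b w)) /\
        (forall a b w, i (imp a b) w <-> impK R (i a) (i b) w) /\
        (forall (join : A -> A -> A) (bot : A),
           is_finite_joins join bot -> distributive join bot ->
           internalizes_joins imp join bot ->
           (forall w, ~ i bot w) /\
           (forall a b w, i (join a b) w <-> (i a w \/ i b w))) /\
        (forall nabla : A -> A, temporal imp nabla ->
           (forall a w, i (nabla a) w <-> nablaK R (i a) w) /\
           (forall Rs : cond -> Prop,
              (forall c, Rs c -> alg_sat imp nabla c) ->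
              forall c, Rs c -> frame_sat leW R c)).
Proof.
exists pt, leW, RR, ii.
split; first exact: L_frame.
split; first by move=> a u v ua [h _]; apply: h.
split.
  split; first by move=> w; apply: ftop.
  move=> a b w; rewrite /ii; split; last by case=> h1 h2; apply: fmeet.
  by move=> h; split; apply: fup h _; [apply: leIl | apply: leIr].
split; first exact: L_emb.
split; first exact: L_imp.
split; first exact: L_join.
move=> nab Ht; split; first by move=> a w; apply: L_nab.
by move=> Rs HRs c Rc; apply: (L_conds _ Ht); apply: HRs.
Qed.
End Main.

Theorem theorem8p7 (d : Order.disp_t) (A : tMeetSemilatticeType d)
  (imp : A -> A -> A) :
  is_implication imp -> internalizes_meets imp ->
  exists (W : Type) (leW R : W -> W -> Prop) (i : A -> W -> Prop),
    kripke_frame leW R /\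
        (* i lands in U(W, leW) *)
        (forall a, is_upset leW (i a)) /\
        (* i preserves finite meets *)
        ((forall w, i \top w) /\
          (forall a b w, i (a `&` b) w <-> (i a w /\ i b w))) /\
        (* i is an order embedding *)
        (forall a b, a <= b <-> (forall w, i a w -> i b w)) /\
        (* i preserves implication *)
        (forall a b w, i (imp a b) w <-> impK R (i a) (i b) w) /\
        (* finite joins are preserved under the distributivity hypotheses *)
        (forall (join : A -> A -> A) (bot : A),
           is_finite_joins join bot -> distributive join bot ->
           internalizes_joins imp join bot ->
           (forall w, ~ i bot w) /\
           (forall a b w, i (join a b) w <-> (i a w \/ i b w))) /\
        (* temporal algebra case *)
        (forall nabla : A -> A, temporal imp nabla ->
           (forall a w, i (nabla a) w <-> nablaK R (i a) w) /\
           (forall Rs : cond -> Prop,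
              (forall c, Rs c -> alg_sat imp nabla c) ->
              forall c, Rs c -> frame_sat leW R c)).
Proof.
move=> Himp Hmi; exact: (@main_thm d A imp Himp Hmi).
Qed.
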